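(* Let $r\ge2$ be an integer. There exists $\alpha_0>0$ such that for every $\alpha\in(0,\alpha_0]$ there exists $\varepsilon_0>0$ such that for every $\varepsilon\in(0,\varepsilon_0]$ there exists $n_0$ such that for all $n\ge n_0$ the following holds. Suppose that $G$ is an $n$-vertex graph that contains at most $\varepsilon n^r$ copies of $K_r$ and $\sigma(G)\ge 2\left(1-\frac{1}{r-1}-\alpha\right)n$. Then $G$ admits a $\sqrt{\alpha}$-independent set of size at least $\frac{n}{r-1}$.
   Context: All graphs are finite and simple. $\sigma(G):=\min\{d(x)+d(y): x\ne y,\ xy\notin E(G)\}$ ($+\infty$ if $G$ is complete). For an $n$-vertex graph $G$ and $\gamma>0$, a set $S\subseteq V(G)$ is $\gamma$-independent if $G[S]$ has at most $\gamma n^2$ edges. *)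

(* Defs.v *)
From HB Require Import structures.
From mathcomp Require Import all_boot all_order all_algebra.
From mathcomp Require Export reals.
Set Implicit Arguments. Unset Strict Implicit. Unset Printing Implicit Defensive.
Import Order.TTheory GRing.Theory Num.Theory.
Local Open Scope ring_scope.

(* A simple graph on vertex set 'I_n is a symmetric irreflexive relation adj. *)

Definition deg (n : nat) (adj : rel 'I_n) (x : 'I_n) : nat := #|[set y | adj x y]|.

Definition is_clique (n : nat) (adj : rel 'I_n) (S : {set 'I_n}) : bool :=
  [forall x in S, forall y in S, (x != y) ==> adj x y].

(* number of copies of K_r in G = number of r-vertex cliques *)
Definition num_Kr (n : nat) (adj : rel 'I_n) (r : nat) : nat :=
  #|[set S : {set 'I_n} | (#|S| == r) && is_clique adj S]|.

Definition edges_in (n : nat) (adj : rel 'I_n) (S : {set 'I_n}) : nat :=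
  #|[set e : {set 'I_n} | [&& #|e| == 2, e \subset S & is_clique adj e]]|.

(* sigma(G) >= t  :  min over non-adjacent distinct pairs of d(x)+d(y) is >= t
   (vacuous, i.e. sigma = +oo, when G is complete) *)
Definition sigma_ge (R : realType) (n : nat) (adj : rel 'I_n) (t : R) : Prop :=
  forall x y : 'I_n, x != y -> ~~ adj x y -> t <= (deg adj x + deg adj y)%:R.

Definition gamma_indep (R : realType) (n : nat) (adj : rel 'I_n) (gamma : R)
  (S : {set 'I_n}) : Prop :=
  (edges_in adj S)%:R <= gamma * n%:R ^+ 2.

(* Main.v *)
Require Import Defs.
From HB Require Import structures.
From mathcomp Require Import all_boot all_order all_algebra.
From mathcomp Require Import reals.
From mathcomp Require Import zify ring lra.
Import Order.TTheory GRing.Theory Num.Theory.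
Set Implicit Arguments. Unset Strict Implicit. Unset Printing Implicit Defensive.


Section Comb.
Variable T : finType.
Variable adj : rel T.
Hypothesis adj_sym : symmetric adj.
Hypothesis adj_irr : irreflexive adj.

Definition cliq (S : {set T}) : bool :=
  [forall x in S, forall y in S, (x != y) ==> adj x y].
Definition degV (V : {set T}) (x : T) : nat := #|[set y in V | adj x y]|.
Definition KV (V : {set T}) (r : nat) : nat :=
  #|[set S : {set T} | [&& S \subset V, #|S| == r & cliq S]]|.
Definition edg (S : {set T}) : nat :=
  #|[set e : {set T} | [&& #|e| == 2, e \subset S & cliq e]]|.

Lemma cliqP (S : {set T}) : reflect (forall x y, x \in S -> y \in S -> x != y -> adj x y) (cliq S).
Proof.
apply: (iffP forallP) => [H x y xS yS nxy | H x].
  by move: (H x); rewrite xS => /forallP /(_ y); rewrite yS nxy.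
apply/implyP => xS; apply/forallP => y; apply/implyP => yS; apply/implyP.
exact: H.
Qed.

Lemma cliq_sub (A B : {set T}) : A \subset B -> cliq B -> cliq A.
Proof.
move=> AB /cliqP H; apply/cliqP => x y xA yA; apply: H; exact: (subsetP AB).
Qed.

Lemma KV2 (V : {set T}) : KV V 2 = edg V.
Proof.
rewrite /KV /edg; apply: eq_card => S; rewrite !inE.
by case: (S \subset V); case: (#|S| == 2).
Qed.

Lemma clique_count (V L : {set T}) r : L \subset V -> cliq L -> 'C(#|L|, r) <= KV V r.
Proof.
move=> LV cL; rewrite -cards_draws /KV; apply: subset_leq_card.
apply/subsetP => S; rewrite !inE => /andP [SL /eqP ->]; rewrite eqxx /=.
rewrite (subset_trans SL LV) /=; exact: cliq_sub SL cL.
Qed.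

Lemma ffact_ge l r : (l - r) ^ r <= l ^_ r.
Proof.
elim: r l => [|r IH] l; first by rewrite expn0 ffactn0.
case: l => [|l]; first by rewrite sub0n exp0n.
rewrite ffactSS subSS expnS; apply: leq_mul; last exact: IH.
exact: leq_trans (leq_subr r l) (leqnSn l).
Qed.


Definition fv (V : {set T}) r (u : T) : nat :=
  #|[set S : {set T} | [&& S \subset V, #|S| == r, cliq S & u \in S]]|.

Lemma double_count (V : {set T}) r : \sum_(u : T) fv V r u = r * KV V r.
Proof.
pose K := [set S : {set T} | [&& S \subset V, #|S| == r & cliq S]].
have E u : fv V r u = \sum_(S in K) (u \in S : nat).
  rewrite /fv -sum1_card big_mkcond /= [RHS]big_mkcond /=.
  apply: eq_bigr => S _; rewrite !inE.
  by case: (S \subset V); case: (#|S| == r); case: (cliq S); case: (u \in S).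
rewrite (eq_bigr _ (fun u _ => E u)) exchange_big /=.
rewrite /KV -/K mulnC -sum_nat_const.
apply: eq_bigr => S; rewrite inE => /and3P [_ /eqP <- _].
by rewrite -sum1_card [RHS]big_mkcond /=.
Qed.

Lemma nbhd_count (V : {set T}) r v : v \in V ->
  KV [set y in V | adj v y] r <= fv V r.+1 v.
Proof.
move=> vV; set W := [set y in V | adj v y].
pose K := [set S : {set T} | [&& S \subset W, #|S| == r & cliq S]].
have vW (S : {set T}) : S \subset W -> v \notin S.
  move=> /subsetP SW; apply/negP => /SW; rewrite inE adj_irr andbF //.
rewrite /KV -/K -(@card_in_imset _ _ (fun S => v |: S) K).
  apply: subset_leq_card; apply/subsetP => X /imsetP [S SK ->]; move: SK; rewrite /K inE.
  move=> /and3P [SW /eqP cS cl]; rewrite inE.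
  rewrite cardsU1 (vW _ SW) cS eqxx setU11 /= !andbT.
  apply/andP; split.
    rewrite subUset sub1set vV /=; apply: subset_trans SW _.
    by apply/subsetP => y; rewrite inE => /andP [].
  apply/cliqP => x y; rewrite !inE => /orP [/eqP ->|xS] /orP [/eqP ->|yS].
  - by rewrite eqxx.
  - by move=> _; move/subsetP: SW => /(_ y yS); rewrite inE => /andP [].
  - by move=> _; move/subsetP: SW => /(_ x xS); rewrite inE adj_sym => /andP [].
  - by move/cliqP: cl; apply.
move=> S1 S2; rewrite !inE => /and3P [S1W _ _] /and3P [S2W _ _] e.
by rewrite -(setU1K (vW _ S1W)) e setU1K // vW.
Qed.


Lemma deg_sub (V W : {set T}) x : W \subset V ->
  degV V x + #|W| <= degV W x + #|V|.
Proof.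
move=> WV; rewrite /degV.
have H : [set y in V | adj x y] \subset [set y in W | adj x y] :|: (V :\: W).
  apply/subsetP => y; rewrite !inE => /andP [yV axy].
  by rewrite yV axy andbT; case: (y \in W).
have := leq_trans (subset_leq_card H) (leq_card_setU _ _).
rewrite cardsD (setIidPr WV) => h.
have := subset_leq_card WV; lia.
Qed.

Lemma edg_ext (A B : {set T}) : edg (A :|: B) <= edg A + #|B| * #|T|.
Proof.
pose phi := fun p : T * T => [set p.1; p.2].
have H : [set e : {set T} | [&& #|e| == 2, e \subset A :|: B & cliq e]] \subset
   [set e : {set T} | [&& #|e| == 2, e \subset A & cliq e]] :|: phi @: setX B setT.
  apply/subsetP => e; rewrite !inE => /and3P [/cards2P [x [y [nxy ->]]] eAB ce].
  rewrite cards2 nxy ce /=.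
  case: (boolP ([set x; y] \subset A)) => //= nA.
  have [z zxy zA] : exists2 z, z \in [set x; y] & z \notin A.
    by move/subsetPn: nA => [z zi zn]; exists z.
  have zB : z \in B.
    by move/subsetP: eAB => /(_ z zxy); rewrite inE (negbTE zA).
  apply/imsetP; move: zxy zB; rewrite !inE => /orP [/eqP ->|/eqP ->] zB.
    by exists (x, y); rewrite // !inE zB.
  by exists (y, x); rewrite /phi /= 1?setUC // !inE zB.
apply: leq_trans (subset_leq_card H) _.
apply: leq_trans (leq_card_setU _ _) _; rewrite leq_add2l.
by apply: leq_trans (leq_imset_card _ _) _; rewrite cardsX cardsT.
Qed.

Lemma sub_card (A : {set T}) t : t <= #|A| -> exists X : {set T}, X \subset A /\ #|X| = t.
Proof.
move=> tA; exists [set x in take t (enum A)]; split; last rewrite cardsE.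
  apply/subsetP => x; rewrite inE => /mem_take; by rewrite mem_enum.
have /card_uniqP -> : uniq (take t (enum A)) by apply: take_uniq; exact: enum_uniq.
by rewrite size_takel // -cardE.
Qed.

End Comb.

Local Open Scope ring_scope.
Section Ar.
Variable R : realFieldType.


Lemma A1 (c x y : R) : x < c -> y < c -> 2 * c <= x + y -> False.
Proof. lra. Qed.

Lemma A2 (P c K E : R) : 0 < P -> P <= c * K -> 0 <= c -> K <= E * P -> c * E = 1/2 -> False.
Proof.
move=> P0 h1 c0 h2 h3.
have : c * K <= c * (E * P) by apply: ler_wpM2l.
rewrite mulrA h3; lra.
Qed.

Lemma A3 (a1 al n m : R) : a1 <= 1/2 -> 0 <= al -> al <= 1/6 -> 0 <= n -> (1 - a1 - al) * n <= m ->
  n <= 3 * m.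
Proof.
move=> h1 h0 h2 n0 h3.
have : 1/3 * n <= (1 - a1 - al) * n by apply: ler_wpM2r => //; lra.
lra.
Qed.

Lemma A4 (n h f k2 K E Q : R) : 0 < n -> n <= 2 * h -> h * f <= k2 * K -> K <= E * (n * Q) ->
  0 <= f -> 0 <= k2 -> f <= 2 * k2 * E * Q.
Proof.
move=> n0 h1 h2 h3 f0 k0.
have e1 : n * f <= 2 * h * f by apply: ler_wpM2r.
have e2 : k2 * K <= k2 * (E * (n * Q)) by apply: ler_wpM2l.
have : n * f <= n * (2 * k2 * E * Q).
  have -> : n * (2 * k2 * E * Q) = 2 * (k2 * (E * (n * Q))) by ring.
  lra.
by rewrite ler_pM2l.
Qed.

Lemma A5 (a1 b al n m dVx dVy dWx dWy : R) :
  0 <= al -> 0 <= b -> b <= 1 -> 0 <= n -> b * (1 - a1) = a1 ->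
  (1 - a1 - al) * n <= m -> n <= 3 * m ->
  dVx + m <= dWx + n -> dVy + m <= dWy + n ->
  2 * (1 - a1 - al) * n <= dVx + dVy ->
  2 * (1 - b - 6 * al) * m <= dWx + dWy.
Proof.
move=> al0 b0 b1 n0 hab hm hm3 hx hy hs.
have h1 : b * ((1 - a1 - al) * n) <= b * m by apply: ler_wpM2l.
have h2 : al * n <= al * (3 * m) by apply: ler_wpM2l.
have an0 : 0 <= al * n by apply: mulr_ge0.
have h3 : b * (al * n) <= 1 * (al * n) by apply: ler_wpM2r.
have h4 : b * ((1 - a1 - al) * n) = a1 * n - b * (al * n).
  by rewrite -[in RHS]hab; ring.
have e1 : 2 * (1 - b - 6 * al) * m = 2 * m - 2 * (b * m) - 12 * (al * m) by ring.
have e2 : 2 * (1 - a1 - al) * n = 2 * n - 2 * (a1 * n) - 2 * (al * n) by ring.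
have e3 : al * (3 * m) = 3 * (al * m) by ring.
lra.
Qed.

Lemma A6 (a1 b al n m C s : R) :
  0 <= al -> 0 <= b -> b <= 1 -> 0 <= n -> 0 <= C -> b * (1 - a1) = a1 ->
  (1 - a1 - al) * n <= m -> m <= n ->
  (b - C * (6 * al)) * m <= s ->
  (a1 - (6 * C + 1) * al) * n <= s.
Proof.
move=> al0 b0 b1 n0 C0 hab hm hmn hs.
have h1 : b * ((1 - a1 - al) * n) <= b * m by apply: ler_wpM2l.
have an0 : 0 <= al * n by apply: mulr_ge0.
have h3 : b * (al * n) <= 1 * (al * n) by apply: ler_wpM2r.
have h4 : b * ((1 - a1 - al) * n) = a1 * n - b * (al * n).
  by rewrite -[in RHS]hab; ring.
have h5 : (C * (6 * al)) * m <= (C * (6 * al)) * n.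
  by apply: ler_wpM2l => //; apply: mulr_ge0 => //; apply: mulr_ge0 => //; lra.
have e1 : (b - C * (6 * al)) * m = b * m - (C * (6 * al)) * m by ring.
have e2 : (a1 - (6 * C + 1) * al) * n = a1 * n - (C * (6 * al)) * n - al * n by ring.
lra.
Qed.

Lemma A7 (al C m n s : R) : 0 <= al -> 0 <= C -> 0 <= m -> m <= n ->
  s <= C * (6 * al) * m ^+ 2 -> s <= (6 * C + 1) * al * n ^+ 2.
Proof.
move=> al0 C0 m0 mn hs.
have h6 : m ^+ 2 <= n ^+ 2 by apply: lerXn2r; rewrite ?nnegrE //; lra.
have h7 : C * (6 * al) * m ^+ 2 <= C * (6 * al) * n ^+ 2.
  by apply: ler_wpM2l => //; apply: mulr_ge0 => //; apply: mulr_ge0 => //; lra.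
have : 0 <= al * n ^+ 2 by apply: mulr_ge0 => //; apply: exprn_ge0; lra.
have e : (6 * C + 1) * al * n ^+ 2 = C * (6 * al) * n ^+ 2 + al * n ^+ 2 by ring.
lra.
Qed.


Lemma B1 (k t s0 n C al : R) : 0 < k -> k * (t + s0) <= n + k ->
  (k^-1 - C * al) * n <= s0 -> t <= C * al * n + 1.
Proof.
move=> k0 h1 h2.
have h3 : k * ((k^-1 - C * al) * n) <= k * s0 by apply: ler_wpM2l => //; exact: ltW.
have e1 : k * ((k^-1 - C * al) * n) = n - k * (C * al * n).
  by field; rewrite lt0r_neq0.
have : k * t <= k * (C * al * n + 1) by lra.
by rewrite ler_pM2l.
Qed.

Lemma B2 (s C : R) : 0 <= s -> 0 <= C -> 16 * C ^+ 2 * s ^+ 2 <= 1 -> 4 * C * s ^+ 2 <= s.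
Proof. move=> s0 C0 h; nra. Qed.

Lemma B3 (E C al t n s : R) : 0 <= n -> 0 <= C -> 0 <= al -> 0 <= s ->
  E <= C * al * n ^+ 2 + t * n -> t <= C * al * n + 1 -> 4 * C * al <= s -> 2 <= s * n ->
  E <= s * n ^+ 2.
Proof.
move=> n0 C0 al0 s0 hE ht hs hn.
have h1 : t * n <= (C * al * n + 1) * n by apply: ler_wpM2r.
have h2 : (4 * C * al) * n ^+ 2 <= s * n ^+ 2 by apply: ler_wpM2r => //; exact: exprn_ge0.
have h3 : 2 * n <= (s * n) * n by apply: ler_wpM2r.
have e1 : (C * al * n + 1) * n = C * al * n ^+ 2 + n by ring.
have e2 : (s * n) * n = s * n ^+ 2 by ring.
have e3 : (4 * C * al) * n ^+ 2 = 4 * (C * al * n ^+ 2) by ring.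
have : 0 <= C * al * n ^+ 2 by apply: mulr_ge0; [exact: mulr_ge0 | exact: exprn_ge0].
lra.
Qed.

Lemma B4 (c s : R) : 0 <= c -> 4 * c <= s -> c <= s.
Proof. lra. Qed.

End Ar.
Arguments B4 {R c s}.
Arguments B1 {R k t s0 n C al}.
Arguments B2 {R s C}.
Arguments B3 {R E C al t n s}.
Arguments A1 {R c x y}.
Arguments A2 {R P c K E}.
Arguments A3 {R a1 al n m}.
Arguments A4 {R n h f k2 K E Q}.
Arguments A5 {R a1 b al n m dVx dVy dWx dWy}.
Arguments A6 {R a1 b al n m C s}.
Arguments A7 {R al C m n s}.

Definition Pk (R : realType) (k : nat) : Prop :=
 exists C a : R, 0 < C /\ 0 < a /\ forall al : R, 0 < al -> al <= a ->
 exists e : R, 0 < e /\ exists N : nat, forall (T : finType) (adj : rel T) (V : {set T}),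
 symmetric adj -> irreflexive adj -> (N <= #|V|)%N ->
 (KV adj V k.+1)%:R <= e * #|V|%:R ^+ k.+1 ->
 (forall x y, x \in V -> y \in V -> x != y -> ~~ adj x y ->
   2 * (1 - k%:R^-1 - al) * #|V|%:R <= (degV adj V x + degV adj V y)%:R) ->
 exists S : {set T}, S \subset V /\ (k%:R^-1 - C * al) * #|V|%:R <= #|S|%:R /\
   (edg adj S)%:R <= C * al * #|V|%:R ^+ 2.

Lemma P1 (R : realType) : Pk R 1.
Proof.
exists 1, 1; split; first exact: ltr01. split; first exact: ltr01.
move=> al al0 _; exists al; split => //; exists 0%N => T adj V _ _ _ hK _.
exists V; split => //; split.
  rewrite invr1 mul1r; have : 0 <= #|V|%:R :> R by [].
  nra.
by rewrite -KV2 mul1r.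
Qed.

Lemma leq_expw m n r : (m <= n)%N -> (m ^ r <= n ^ r)%N.
Proof. by move=> h; elim: r => [|r IH] //; rewrite !expnS leq_mul. Qed.

Lemma binom_nat (T : finType) (adj : rel T) (V L : {set T}) r :
  L \subset V -> cliq adj L -> (#|V| <= 2 * #|L|)%N -> (4 * r <= #|V|)%N ->
  (#|V| ^ r <= 4 ^ r * r`! * KV adj V r)%N.
Proof.
move=> LV cL h1 h2.
have h3 : (#|V| <= 4 * (#|L| - r))%N by lia.
apply: leq_trans (leq_expw r h3) _.
rewrite expnMn -mulnA leq_mul2l; apply/orP; right.
apply: leq_trans (ffact_ge _ _) _.
by rewrite -bin_ffact mulnC leq_mul2l (clique_count r LV cL) orbT.
Qed.

Lemma Pstep (R : realType) k : (1 <= k)%N -> Pk R k -> Pk R k.+1.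
Proof.
move=> k1 [C [a [C0 [a0 IH]]]].
exists (6 * C + 1), (Num.min 1 a / 6); split; first lra.
split; first by rewrite divr_gt0 // lt_min ltr01 a0.
move=> al al0 ala.
have [al16 al6a] : al <= 1/6 /\ 6 * al <= a.
  move: ala; rewrite ler_pdivlMr // le_min => /andP [h1 h2]; split; lra.
have [e' [e'0 [N' IHg]]] := IH (6 * al) (ltac:(lra)) al6a.
pose E1 := e' / (2 * (k.+2)%:R * 3 ^+ k.+1).
pose E2 := 1 / (2 * 4 ^+ k.+2 * (k.+2)`!%:R : R).
have E10 : 0 < E1.
  rewrite /E1 divr_gt0 //; apply: mulr_gt0; last by rewrite exprn_gt0 //; lra.
  by apply: mulr_gt0; [lra | rewrite ltr0n].
have E20 : 0 < E2.
  rewrite /E2 divr_gt0 //; apply: mulr_gt0; last by rewrite ltr0n fact_gt0.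
  by apply: mulr_gt0; [lra | rewrite exprn_gt0 //; lra].
exists (Num.min E1 E2); split; first by rewrite lt_min E10 E20.
exists (3 * N' + 4 * k.+2).+1 => T adj V sym irr hN hK hsig.
set n := #|V| in hN hK hsig *.
set a1 := ((k.+1)%:R^-1 : R) in hsig *.
set b := (k%:R^-1 : R).
have nR : 0 < n%:R :> R by rewrite ltr0n; clear -hN; lia.
have al0' : 0 <= al by exact: ltW.
have [a10 a12] : 0 < a1 /\ a1 <= 1/2.
  split; first by rewrite invr_gt0 ltr0n.
  rewrite /a1 mul1r lef_pV2 ?posrE ?ltr0n // ler_nat; clear -k1; lia.
have [b0 b1] : 0 < b /\ b <= 1.
  split; first by rewrite invr_gt0 ltr0n.
  by rewrite invf_le1 ?ltr0n // (_ : 1 = 1%:R) // ler_nat.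
have hab : b * (1 - a1) = a1.
  rewrite /a1 /b -addn1 natrD; field.
  by rewrite natr1 !pnatr_eq0 /= -lt0n.
have nP : 0 < n%:R ^+ k.+2 :> R by rewrite exprn_gt0.
have hK1 : (KV adj V k.+2)%:R <= E1 * n%:R ^+ k.+2.
  apply: le_trans hK _; apply: ler_wpM2r; first exact: ltW.
  by rewrite ge_min lexx.
have hK2 : (KV adj V k.+2)%:R <= E2 * n%:R ^+ k.+2.
  apply: le_trans hK _; apply: ler_wpM2r; first exact: ltW.
  by rewrite ge_min lexx orbT.
pose H := [set x in V | (1 - a1 - al) * n%:R <= (degV adj V x)%:R].
have HV : H \subset V by apply/subsetP => x; rewrite inE => /andP [].
have hH : (n <= 2 * #|H|)%N.
  rewrite leqNgt; apply/negP => hlt.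
  pose L := V :\: H.
  have LV : L \subset V by exact: subsetDl.
  have cL : cliq adj L.
    apply/cliqP => x y; rewrite !inE => /andP [xnH xV] /andP [ynH yV] nxy.
    apply/negPn/negP => nadj; have := hsig x y xV yV nxy nadj.
    move: xnH ynH; rewrite xV yV /= -!ltNge natrD -mulrA.
    by move=> h1 h2 h3; case: (A1 h1 h2 h3).
  have cardL : #|L| = (n - #|H|)%N by rewrite cardsD (setIidPr HV).
  have h1 : (n <= 2 * #|L|)%N.
    rewrite cardL; clear -hlt; lia.
  have h2 : (4 * k.+2 <= n)%N by clear -hN; lia.
  have hb2 : n%:R ^+ k.+2 <= 4%:R ^+ k.+2 * (k.+2)`!%:R * (KV adj V k.+2)%:R :> R.
    by rewrite -!natrX -!natrM ler_nat; exact: (@binom_nat T adj V L k.+2 LV cL h1 h2).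
  have c0 : 0 <= (4%:R ^+ k.+2 * (k.+2)`!%:R : R) by rewrite mulr_ge0 // exprn_ge0.
  exfalso; apply: (A2 nP hb2 c0 hK2).
  rewrite /E2; field.
  apply/andP; split; first by rewrite pnatr_eq0 -lt0n fact_gt0.
  by apply: expf_neq0; rewrite pnatr_eq0.
have [v0 v0H] : exists v0, v0 \in H.
  apply/card_gt0P; rewrite lt0n; apply/eqP => h0; move: hH hN.
  by rewrite h0 muln0 leqn0 => /eqP ->; rewrite ltn0.
case: (arg_minnP (fv adj V k.+2) v0H) => v vH0 vmin.
have vH : v \in H by [].
have [vV vdeg] : v \in V /\ (1 - a1 - al) * n%:R <= (degV adj V v)%:R.
  by move: vH; rewrite /H inE => /andP [].
have hf : (#|H| * fv adj V k.+2 v <= k.+2 * KV adj V k.+2)%N.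
  rewrite -double_count.
  apply: (@leq_trans (\sum_(u in H) fv adj V k.+2 u)).
    rewrite -sum_nat_const; apply: leq_sum => u uH; exact: vmin.
  by rewrite [X in (_ <= X)%N](bigID (fun u => u \in H)) /= leq_addr.
pose W := [set y in V | adj v y].
set m := #|W|.
have WV : W \subset V by apply/subsetP => x; rewrite inE => /andP [].
have hm : (1 - a1 - al) * n%:R <= m%:R.
  exact: vdeg.
have hm3 : n%:R <= 3 * m%:R :> R := A3 a12 al0' al16 (ltW nR) hm.
have hmn : (m <= n)%N by exact: subset_leq_card.
have hmnR : m%:R <= n%:R :> R by rewrite ler_nat.
have hmn3 : (n <= 3 * m)%N by rewrite -(ler_nat R) natrM.
have hHR : n%:R <= 2 * #|H|%:R :> R by rewrite -(ler_nat R) natrM in hH.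
have hfR : #|H|%:R * (fv adj V k.+2 v)%:R <= (k.+2)%:R * (KV adj V k.+2)%:R :> R.
  by rewrite -!natrM ler_nat.
have hKW : (KV adj W k.+1)%:R <= e' * m%:R ^+ k.+1.
  have h1 : (KV adj W k.+1 <= fv adj V k.+2 v)%N.
    exact: (@nbhd_count T adj sym irr V k.+1 v vV).
  rewrite -(ler_nat R) in h1; apply: le_trans h1 _.
  have hQ : n%:R ^+ k.+1 <= 3 ^+ k.+1 * m%:R ^+ k.+1 :> R.
    rewrite -exprMn; apply: lerXn2r; rewrite ?nnegrE //.
    by apply: mulr_ge0 => //; lra.
  rewrite exprS in hK1.
  have h2 := A4 nR hHR hfR hK1 (ler0n _ _) (ler0n _ _).
  apply: le_trans h2 _.
  have -> : e' = 2 * (k.+2)%:R * E1 * 3 ^+ k.+1.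
    rewrite /E1; field; apply/andP; split; first by rewrite expf_neq0 // pnatr_eq0.
    by rewrite -natrD pnatr_eq0.
  rewrite mulrA -[X in _ <= X]mulrA; apply: ler_wpM2l => //.
  by rewrite divr_ge0 ?mulr_ge0 ?exprn_ge0 ?ler0n ?(ltW e'0).
have hsigW : forall x y : T, x \in W -> y \in W -> x != y -> ~~ adj x y ->
   2 * (1 - k%:R^-1 - 6 * al) * #|W|%:R <= (degV adj W x + degV adj W y)%:R.
  move=> x y xW yW nxy nadj.
  have xV : x \in V by exact: (subsetP WV).
  have yV : y \in V by exact: (subsetP WV).
  have := hsig x y xV yV nxy nadj.
  have := deg_sub adj x WV; have := deg_sub adj y WV.
  rewrite -!(ler_nat R) !natrD -/m -/b => hy hx hs.
  exact: (A5 al0' (ltW b0) b1 (ltW nR) hab hm hm3 hx hy hs).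
have [S [SW [hS1 hS2]]] := IHg T adj W sym irr (ltac:(clear -hN hmn3; lia)) hKW hsigW.
exists S; split; first exact: subset_trans SW WV.
rewrite -/m -/b in hS1 hS2; split.
  exact: (A6 al0' (ltW b0) b1 (ltW nR) (ltW C0) hab hm hmnR hS1).
exact: (A7 al0' (ltW C0) (ler0n _ _) hmnR hS2).
Qed.

Lemma Pall (R : realType) k : (1 <= k)%N -> Pk R k.
Proof.
elim: k => [//|k IH] _.
case: k IH => [|k] IH; first exact: P1.
by apply: Pstep => //; apply: IH.
Qed.

Theorem proposition2p3 (R : realType) (r : nat) : (2 <= r)%N ->
  exists alpha0 : R, 0 < alpha0 /\
  forall alpha : R, 0 < alpha <= alpha0 ->
  exists eps0 : R, 0 < eps0 /\
  forall eps : R, 0 < eps <= eps0 ->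
  exists n0 : nat, forall n : nat, (n0 <= n)%N ->
  forall adj : rel 'I_n, symmetric adj -> irreflexive adj ->
  (num_Kr adj r)%:R <= eps * n%:R ^+ r ->
  sigma_ge adj (2 * (1 - (r.-1)%:R^-1 - alpha) * n%:R) ->
  exists S : {set 'I_n},
    gamma_indep adj (Num.sqrt alpha) S /\ (n%:R / (r.-1)%:R : R) <= (#|S|)%:R.
Proof.
case: r => [//|k] r2; rewrite ltnS in r2.
have [C [a [C0 [a0 HP]]]] := Pall R r2.
pose a0' := Num.min (Num.min a 1) (1 / (16 * C ^+ 2)).
have C20 : 0 < 16 * C ^+ 2 by rewrite mulr_gt0 // exprn_gt0.
exists a0'; split.
  by rewrite !lt_min a0 ltr01 divr_gt0.
move=> al /andP [al0 ala].
move: ala; rewrite !le_min => /andP [/andP [ala al1] alC].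
have [e [e0 [N HN]]] := HP al al0 ala.
exists e; split => // eps /andP [eps0 epse].
exists (maxn N (Num.Def.archi_bound (2 / al))) => n hn adj sym irr hK hsig.
have hNn : (N <= n)%N by apply: leq_trans hn; exact: leq_maxl.
have hbn : (Num.Def.archi_bound (2 / al) <= n)%N by apply: leq_trans hn; exact: leq_maxr.
have n2 : 2 / al < n%:R.
  apply: lt_le_trans (archi_boundP _) _; first by rewrite divr_ge0 // ltW.
  by rewrite ler_nat.
have nR0 : 0 <= n%:R :> R by [].
have cardV : #|[set: 'I_n]| = n by rewrite cardsT card_ord.
have hKV : (KV adj [set: 'I_n] k.+1)%:R <= e * #|[set: 'I_n]|%:R ^+ k.+1.
  rewrite cardV; apply: le_trans _ (ler_wpM2r (exprn_ge0 _ nR0) epse).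
  apply: le_trans _ hK; rewrite ler_nat.
  rewrite /KV /num_Kr; apply: subset_leq_card; apply/subsetP => S.
  by rewrite !inE subsetT.
have hsigV : forall x y, x \in [set: 'I_n] -> y \in [set: 'I_n] -> x != y -> ~~ adj x y ->
   2 * (1 - k%:R^-1 - al) * #|[set: 'I_n]|%:R <=
   (degV adj [set: 'I_n] x + degV adj [set: 'I_n] y)%:R.
  move=> x y _ _ nxy nadj; rewrite cardV.
  have -> : degV adj [set: 'I_n] x = deg adj x.
    by rewrite /degV /deg; apply: eq_card => z; rewrite !inE.
  have -> : degV adj [set: 'I_n] y = deg adj y.
    by rewrite /degV /deg; apply: eq_card => z; rewrite !inE.
  exact: hsig.
have [S0 [_ [hS1 hS2]]] := HN _ adj [set: 'I_n] sym irr (ltac:(by rewrite cardV)) hKV hsigV.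
rewrite cardV in hS1 hS2.
set s := Num.sqrt al.
have s0 : 0 <= s by exact: sqrtr_ge0.
have ss : s ^+ 2 = al by rewrite sqr_sqrtr // ltW.
have hs4 : 4 * C * al <= s.
  rewrite -ss; apply: B2 => //; first exact: ltW.
  by rewrite ss; move: alC; rewrite ler_pdivlMr // mulrC.
have hsn : 2 <= s * n%:R.
  have als : al <= s.
    rewrite -ss expr2; have : s <= 1.
      rewrite -(sqrtr1 R); apply: ler_wsqrtr; exact: al1.
    move=> s1; rewrite -[X in _ <= X]mul1r; apply: ler_wpM2r => //.
  have : 2 <= al * n%:R by move: n2; rewrite ltr_pdivrMr // mulrC => /ltW.
  move=> h; apply: le_trans h _; apply: ler_wpM2r => //.
have k0 : 0 < k%:R :> R by rewrite ltr0n.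
pose q := ((n + k.-1) %/ k)%N.
have hq1 : (n <= q * k)%N.
  rewrite /q; have := divn_eq (n + k.-1)%N k; have := ltn_pmod (n + k.-1)%N r2.
  move: ((n + k.-1) %/ k)%N ((n + k.-1) %% k)%N => Q M.
  move: (Q * k)%N => P; clear -r2; lia.
have hq2 : (q * k <= n + k.-1)%N.
  by rewrite /q [X in (_ <= X)%N](divn_eq (n + k.-1)%N k) leq_addr.
clearbody q.
have n1 : (0 < n)%N.
  rewrite -(ltr_nat R); apply: le_lt_trans n2; rewrite divr_ge0 // ltW //.
have hqn : (q <= n)%N.
  have h : (n + k.-1 <= n * k)%N.
    by rewrite -{2}(prednK r2) mulnS leq_add2l leq_pmull.
  by rewrite -(leq_pmul2r r2); apply: leq_trans hq2 h.
have hsize : n%:R / k%:R <= q%:R :> R.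
  by rewrite ler_pdivrMr // -natrM ler_nat.
have Cal0 : 0 <= C * al by rewrite mulr_ge0 // ltW.
case: (leqP q #|S0|) => hq.
  exists S0; split.
    rewrite /gamma_indep (_ : edges_in adj S0 = edg adj S0) //; apply: le_trans hS2 _; apply: ler_wpM2r; first exact: exprn_ge0.
    have hs4' : 4 * (C * al) <= s by rewrite mulrA.
    exact: (B4 Cal0 hs4').
  by apply: le_trans hsize _; rewrite ler_nat.
have [X [XC cX]] : exists X : {set 'I_n}, X \subset ~: S0 /\ #|X| = (q - #|S0|)%N.
  apply: sub_card; have := cardsC S0; rewrite card_ord => e'.
  by rewrite leq_subLR e'.
have cS : #|S0 :|: X| = q.
  rewrite cardsU (_ : S0 :&: X = set0) ?cards0 ?subn0 ?cX.
    by rewrite subnKC //; exact: ltnW.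
  apply/setP => z; rewrite !inE; apply/negbTE/negP => /andP [zS zX].
  by move/subsetP: XC => /(_ z zX); rewrite inE zS.
exists (S0 :|: X); split; last by rewrite cS.
rewrite /gamma_indep (_ : edges_in adj (S0 :|: X) = edg adj (S0 :|: X)) //.
have hE := edg_ext adj S0 X.
rewrite card_ord cX in hE.
have ht : (q - #|S0|)%:R <= C * al * n%:R + 1 :> R.
  have hk : (k * (q - #|S0| + #|S0|) <= n + k)%N.
    rewrite subnK; last exact: ltnW.
    rewrite mulnC; apply: leq_trans hq2 _.
    by rewrite leq_add2l leq_pred.
  have hkR : k%:R * ((q - #|S0|)%:R + #|S0|%:R) <= n%:R + k%:R :> R.
    by rewrite -!natrD -natrM ler_nat.
  exact: (B1 k0 hkR hS1).
apply: (B3 nR0 (ltW C0) (ltW al0) s0 _ ht hs4 hsn).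
have h1 : (edg adj (S0 :|: X))%:R <= (edg adj S0 + (q - #|S0|) * n)%:R :> R.
  by rewrite ler_nat.
by apply: le_trans h1 _; rewrite natrD natrM lerD2r.
Qed.
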